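(* Let $(P,\le,A_1\ldots A_k)$ be a regular poset, let $t\in[3,k]$, and suppose $A_t$ is inserted between two antichains $A_p\sqsubset A_s$ that are consecutive in $(\{A_1,\dots,A_{t-1}\},\sqsubseteq)$ (so that $A_p\sqsubset A_t\sqsubset A_s$ are consecutive in $(\{A_1,\dots,A_t\},\sqsubseteq)$). Then for every node $M$ of $(A_p,A_t,<)$ or of $(A_t,A_s,<)$ there is a unique node $N$ of $(A_p,A_s,<)$ such that $\mathrm{Int}(M)\subset\mathrm{Int}(N)$.
   Context: Let $(P,\le)$ be a finite poset of width $w$. For $A\subseteq P$ let $A{\uparrow}=\{y\in P: x\le y\text{ for some }x\in A\}$ and $A{\downarrow}=\{y\in P: y\le x\text{ for some }x\in A\}$. For maximal antichains $A,B$ write $A\sqsubseteq B$ if $A\subseteq B{\downarrow}$, and $A\sqsubset B$ if also $A\ne B$. For disjoint antichains $A\sqsubset B$, $(A,B,<)$ denotes the bipartite graph with classes $A,B$ and an edge $(a<b)$ for each $a\in A$, $b\in B$ with $a<b$; it is regular if every edge lies in some perfect matching. A regular poset is a triple $(P,\le,A_1\ldots A_k)$ where $A_1,\dots,A_k$ are maximum antichains of $P$ such that: they partition $P$; $(\{A_1,\dots,A_k\},\sqsubseteq)$ is a linear order with minimum $A_1$ and maximum $A_2$; $a<b$ for all $a\in A_1$, $b\in A_2$; and for every $t\in[2,k]$ and every two antichains $A_p\sqsubset A_s$ consecutive in $(\{A_1,\dots,A_t\},\sqsubseteq)$, the bipartite graph $(A_p,A_s,<)$ is regular. For two such consecutive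 antichains $A_p\sqsubset A_s$, a node of $(A_p,A_s,<)$ is a bipartite graph $(X,Y,<)$ with $X\subseteq A_p$, $Y\subseteq A_s$ and $X\cup Y$ the vertex set of a connected component of $(A_p,A_s,<)$. For a node $N=(X,Y,<)$, $\mathrm{Int}(N)=X{\uparrow}\cap Y{\downarrow}$. *)

(* Defs.v *)
From mathcomp Require Import all_boot all_order.
Set Implicit Arguments. Unset Strict Implicit. Unset Printing Implicit Defensive.
Import Order.TTheory.
Local Open Scope order_scope.

Section RegularPoset.
Context {disp : Order.disp_t} {T : finPOrderType disp}.

Definition antichain (A : {set T}) : bool :=
  [forall x in A, forall y in A, (x <= y) ==> (x == y)].

Definition width : nat := \max_(B : {set T} | antichain B) #|B|.

Definition maximum_antichain (A : {set T}) : bool :=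
  antichain A && (#|A| == width).

Definition upset (A : {set T}) : {set T} := [set y | [exists x in A, x <= y]].
Definition downset (A : {set T}) : {set T} := [set y | [exists x in A, y <= x]].

Definition sqle (A B : {set T}) : bool := A \subset downset B.
Definition sqlt (A B : {set T}) : bool := sqle A B && (A != B).

Definition bip_edges (A B : {set T}) : {set T * T} :=
  [set e | [&& e.1 \in A, e.2 \in B & e.1 < e.2]].

Definition perfect_matching (A B : {set T}) (M : {set T * T}) : Prop :=
  M \subset bip_edges A B /\
  (forall a, a \in A -> #|[set e in M | e.1 == a]| = 1) /\
  (forall b, b \in B -> #|[set e in M | e.2 == b]| = 1).

Definition regular_bip (A B : {set T}) : Prop :=
  forall e, e \in bip_edges A B ->
    exists M, perfect_matching A B M /\ e \in M.

Definition bip_adj (A B : {set T}) : rel T :=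
  fun x y => [|| [&& x \in A, y \in B & x < y] | [&& y \in A, x \in B & y < x]].

Definition is_node (A B X Y : {set T}) : Prop :=
  X \subset A /\ Y \subset B /\
  exists2 v, v \in A :|: B & X :|: Y = [set y | connect (bip_adj A B) v y].

Definition Int (X Y : {set T}) : {set T} := upset X :&: downset Y.

Definition consecutive (A : nat -> {set T}) (t p s : nat) : Prop :=
  [/\ 1 <= p <= t, 1 <= s <= t, sqlt (A p) (A s) &
      forall q, 1 <= q <= t -> ~~ (sqlt (A p) (A q) && sqlt (A q) (A s))]%N.

Definition regular_poset (A : nat -> {set T}) (k : nat) : Prop :=
  (forall i, (1 <= i <= k)%N -> maximum_antichain (A i)) /\
  (forall i, (1 <= i <= k)%N -> A i != set0) /\
  (forall i j, (1 <= i <= k)%N -> (1 <= j <= k)%N -> i != j ->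
      [disjoint A i & A j]) /\
  (forall x : T, exists2 i, (1 <= i <= k)%N & x \in A i) /\
  (forall i j, (1 <= i <= k)%N -> (1 <= j <= k)%N ->
      sqle (A i) (A j) || sqle (A j) (A i)) /\
  (forall i, (1 <= i <= k)%N -> sqle (A 1%N) (A i) /\ sqle (A i) (A 2%N)) /\
  (forall a b, a \in A 1%N -> b \in A 2%N -> a < b) /\
  (forall t p s, (2 <= t <= k)%N -> consecutive A t p s ->
      regular_bip (A p) (A s)).

End RegularPoset.

(* Main.v *)
Require Import Defs.
From mathcomp Require Import all_boot all_order.
Import Order.TTheory.
Local Open Scope order_scope.

Section Aux.
Context {disp : Order.disp_t} {T : finPOrderType disp}.
Implicit Types (A B X Y Ap At As : {set T}).

Lemma bip_adj_sym A B : symmetric (bip_adj A B).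
Proof. by move=> x y; rewrite /bip_adj orbC. Qed.

Lemma csym A B : connect_sym (bip_adj A B).
Proof. exact/sym_connect_sym/bip_adj_sym. Qed.

Lemma connect_pred (e : rel T) (P : pred T) :
  (forall x y, e x y -> P x -> P y) -> forall x y, connect e x y -> P x -> P y.
Proof.
move=> H x y /connectP [pth]; elim: pth x => [|z pth IH] x /=; first by move=> _ ->.
by move=> /andP[exz pz] ly Px; apply: (IH z pz ly); exact: (H _ _ exz Px).
Qed.

Lemma comp_in A B v y : v \in A :|: B -> connect (bip_adj A B) v y -> y \in A :|: B.
Proof.
move=> vAB cv; apply: (@connect_pred _ (mem (A :|: B))) cv vAB => x z.
by rewrite /bip_adj => /orP[/and3P[_ zB _]|/and3P[zA _ _]] _; rewrite !inE ?zB ?zA ?orbT.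
Qed.

Lemma node_split A B X Y v : [disjoint A & B] -> X \subset A -> Y \subset B ->
  X :|: Y = [set y | connect (bip_adj A B) v y] ->
  forall u, (u \in X = connect (bip_adj A B) v u && (u \in A)) /\
            (u \in Y = connect (bip_adj A B) v u && (u \in B)).
Proof.
move=> dAB sX sY e u.
have: (u \in X :|: Y) = connect (bip_adj A B) v u by rewrite e inE.
rewrite inE => <-.
case uX: (u \in X); case uY: (u \in Y) => /=.
- by have := disjointFr dAB (subsetP sX _ uX); rewrite (subsetP sY _ uY).
- by rewrite (subsetP sX _ uX) (disjointFr dAB (subsetP sX _ uX)).
- by rewrite (subsetP sY _ uY) (disjointFl dAB (subsetP sY _ uY)).
- by [].
Qed.

Arguments node_split {A B X Y v}.

Lemma uniq_node A B X Y X' Y' z : [disjoint A & B] -> is_node A B X Y ->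
  is_node A B X' Y' -> z \in Int X Y -> z \in Int X' Y' -> (X, Y) = (X', Y').
Proof.
move=> dAB [sX [sY [v vAB eX]]] [sX' [sY' [v' vAB' eX']]].
rewrite !inE => /andP[/exists_inP[x xX xz] _] /andP[_ /exists_inP[y yY zy]].
have [hX _] := node_split dAB sX sY eX x.
have [_ hY] := node_split dAB sX' sY' eX' y.
rewrite hX in xX; rewrite hY in yY.
case/andP: xX => cvx xA; case/andP: yY => cvy yB.
have xy : x < y.
  rewrite lt_def (le_trans xz zy) andbT; apply/eqP => exy.
  by have := disjointFr dAB xA; rewrite -exy yB.
have cvx' : connect (bip_adj A B) v' x.
  apply: connect_trans cvy _; apply: connect1.
  by rewrite /bip_adj xA yB xy orbT.
have ee : forall u, connect (bip_adj A B) v u = connect (bip_adj A B) v' u.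
  move=> u; by rewrite (same_connect (csym A B) cvx) (same_connect (csym A B) cvx').
congr pair; apply/setP => u.
  have [h1 _] := node_split dAB sX sY eX u; have [h2 _] := node_split dAB sX' sY' eX' u.
  by rewrite h1 h2 ee.
have [_ h1] := node_split dAB sX sY eX u; have [_ h2] := node_split dAB sX' sY' eX' u.
by rewrite h1 h2 ee.
Qed.

Lemma comp_node A B w : w \in A :|: B ->
  is_node A B ([set y | connect (bip_adj A B) w y] :&: A)
              ([set y | connect (bip_adj A B) w y] :&: B).
Proof.
move=> wAB; split; first exact: subsetIr.
split; first exact: subsetIr.
exists w => //; rewrite -setIUr; apply/setIidPl; apply/subsetP => u.
rewrite inE; exact: comp_in.
Qed.

Lemma up_strict A B : maximum_antichain A -> maximum_antichain B ->
  [disjoint A & B] -> sqle A B -> forall b, b \in B -> exists2 a, a \in A & a < b.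
Proof.
move=> /andP[aA /eqP cA] /andP[aB /eqP cB] dAB sAB b bB.
case: (boolP [exists a in A, a < b]) => [/exists_inP[a ? ?]|]; first by exists a.
move=> /exists_inP nab; exfalso.
have bA : b \notin A by rewrite (disjointFl dAB bB).
have anti : antichain (b |: A).
  apply/forall_inP => x; move=> /setU1P[->|xA];
  apply/forall_inP => y; move=> /setU1P[->|yA]; apply/implyP => le.
  - by [].
  - have := subsetP sAB _ yA; rewrite inE => /exists_inP[b' b'B yb'].
    have bb' : b == b'.
      by move/forall_inP: aB => /(_ b bB) /forall_inP /(_ b' b'B) /implyP; apply; exact: le_trans le yb'.
    move/eqP: bb' yb' => <- yb.
    have eyb : y = b by apply/le_anti; rewrite yb le.
    by move: bA; rewrite -eyb yA.
  - case: (boolP (x == b)) => [/eqP exb|nxb]; first by move: bA; rewrite -exb xA.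
    by exfalso; apply: nab; exists x => //; rewrite lt_def eq_sym nxb le.
  - by move/forall_inP: aA => /(_ x xA) /forall_inP /(_ y yA) /implyP; apply.
have := @leq_bigmax_cond _ antichain (fun B : {set T} => #|B|) _ anti.
rewrite -/width -cA cardsU1 bA /=.
by rewrite ltnn.
Qed.

Lemma edge_exists A B X Y : [disjoint A & B] -> sqle A B ->
  (forall b, b \in B -> exists2 a, a \in A & a < b) -> is_node A B X Y ->
  exists x, exists2 y, x \in X /\ y \in Y & x < y.
Proof.
move=> dAB sAB up [sX [sY [v vAB eX]]].
have hs := node_split dAB sX sY eX.
case/setUP: vAB => [vA|vB].
- have := subsetP sAB _ vA; rewrite inE => /exists_inP[y yB vy].
  have lt : v < y.
    rewrite lt_def vy andbT; apply/eqP => e.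
    by have := disjointFr dAB vA; rewrite -e yB.
  exists v; exists y => //; split.
    by have [-> _] := hs v; rewrite connect0 vA.
  have [_ ->] := hs y; rewrite yB andbT; apply: connect1.
  by rewrite /bip_adj vA yB lt.
- have [a aA av] := up v vB.
  exists a; exists v => //; split.
    have [-> _] := hs a; rewrite aA andbT; apply: connect1.
    by rewrite /bip_adj aA vB av orbT.
  by have [_ ->] := hs v; rewrite connect0 vB.
Qed.


Arguments edge_exists {A B X Y}.
Arguments uniq_node {A B X Y X' Y' z}.
Arguments comp_node {A B w}.
Arguments up_strict {A B}.

Lemma case1 Ap At As X Y : [disjoint Ap & At] -> [disjoint At & As] ->
  [disjoint Ap & As] -> sqle Ap At -> sqle At As ->
  (forall b, b \in At -> exists2 a, a \in Ap & a < b) ->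
  is_node Ap At X Y ->
  exists! N : {set T} * {set T},
      is_node Ap As N.1 N.2 /\ Int X Y \subset Int N.1 N.2.
Proof.
move=> dpt dts dps spt sts up nd.
have [x0 [y0 [x0X y0Y] x0y0]] := edge_exists dpt spt up nd.
case: nd => [sX [sY [v vAB eX]]].
have hs := node_split dpt sX sY eX.
have [hx0 _] := hs x0; rewrite hx0 in x0X; case/andP: x0X => cvx0 x0A.
set e := bip_adj Ap As.
set P : pred T := fun u => ((u \in Ap) ==> connect e x0 u) &&
   ((u \in At) ==> [exists b in As, (u <= b) && connect e x0 b]).
have Pall : forall u, connect (bip_adj Ap At) v u -> P u.
  move=> u cvu.
  have cxu : connect (bip_adj Ap At) x0 u.
    by apply: connect_trans cvu; rewrite (csym Ap At).
  apply: (@connect_pred _ P) cxu _.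
    move=> x y; rewrite /bip_adj => /orP[/and3P[xA yT xy]|/and3P[yA xT yx]] /andP[Px1 Px2].
    - have cx : connect e x0 x by move/implyP: Px1; apply.
      apply/andP; split; first by rewrite (disjointFl dpt yT).
      apply/implyP => _; have := subsetP sts _ yT; rewrite inE => /exists_inP[b bS yb].
      apply/exists_inP; exists b => //; rewrite yb /=.
      apply: connect_trans cx _; apply: connect1.
      by rewrite /e /bip_adj xA bS (lt_le_trans xy yb).
    - move/implyP: Px2 => /(_ xT) /exists_inP[b bS /andP[xb cb]].
      apply/andP; split; last by rewrite (disjointFr dpt yA).
      apply/implyP => _; apply: connect_trans cb _; apply: connect1.
      by rewrite /e /bip_adj yA bS (lt_le_trans yx xb) orbT.
  by rewrite /P x0A connect0 (disjointFr dpt x0A).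
exists ([set y | connect e x0 y] :&: Ap, [set y | connect e x0 y] :&: As).
have x0I : x0 \in Int X Y.
  rewrite !inE; apply/andP; split; apply/exists_inP.
    by exists x0; rewrite ?le_refl // hx0 cvx0 x0A.
  by exists y0 => //; exact: ltW.
have x0S : x0 \in Ap :|: As by rewrite inE x0A.
have sub : Int X Y \subset Int ([set y | connect e x0 y] :&: Ap) ([set y | connect e x0 y] :&: As).
  apply/subsetP => z; rewrite !inE => /andP[/exists_inP[x xX xz] /exists_inP[y yY zy]].
  have [hx _] := hs x; have [_ hy] := hs y.
  rewrite hx in xX; rewrite hy in yY.
  case/andP: xX => cvx xA; case/andP: yY => cvy yT.
  have /andP[Px1 _] := Pall x cvx; have /andP[_ Py2] := Pall y cvy.
  apply/andP; split; apply/exists_inP.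
    by exists x => //; rewrite !inE xA andbT; move/implyP: Px1; apply.
  move/implyP: Py2 => /(_ yT) /exists_inP[b bS /andP[yb cb]].
  by exists b; [rewrite !inE cb bS | exact: le_trans zy yb].
split; first by split; [exact: comp_node x0S | exact: sub].
case=> N1 N2 /= [nN sN].
exact: uniq_node dps (comp_node x0S) nN (subsetP sub _ x0I) (subsetP sN _ x0I).
Qed.



Lemma case2 Ap At As X Y : [disjoint Ap & At] -> [disjoint At & As] ->
  [disjoint Ap & As] -> sqle At As ->
  (forall b, b \in At -> exists2 a, a \in Ap & a < b) ->
  (forall b, b \in As -> exists2 a, a \in At & a < b) ->
  is_node At As X Y ->
  exists! N : {set T} * {set T},
      is_node Ap As N.1 N.2 /\ Int X Y \subset Int N.1 N.2.
Proof.
move=> dpt dts dps sts up up2 nd.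
have [x0 [y0 [x0X y0Y] x0y0]] := edge_exists dts sts up2 nd.
case: nd => [sX [sY [v vAB eX]]].
have hs := node_split dts sX sY eX.
have [_ hy0] := hs y0; rewrite hy0 in y0Y; case/andP: y0Y => cvy0 y0S.
set e := bip_adj Ap As.
set P : pred T := fun u => ((u \in As) ==> connect e y0 u) &&
   ((u \in At) ==> [exists a in Ap, (a <= u) && connect e y0 a]).
have Pall : forall u, connect (bip_adj At As) v u -> P u.
  move=> u cvu.
  have cxu : connect (bip_adj At As) y0 u.
    by apply: connect_trans cvu; rewrite (csym At As).
  apply: (@connect_pred _ P) cxu _.
    move=> x y; rewrite /bip_adj => /orP[/and3P[xT yS xy]|/and3P[yT xS yx]] /andP[Px1 Px2].
    - move/implyP: Px2 => /(_ xT) /exists_inP[a aA /andP[ax ca]].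
      apply/andP; split; last by rewrite (disjointFl dts yS).
      apply/implyP => _; apply: connect_trans ca _; apply: connect1.
      by rewrite /e /bip_adj aA yS (le_lt_trans ax xy).
    - have cx : connect e y0 x by move/implyP: Px1; apply.
      apply/andP; split; first by rewrite (disjointFr dts yT).
      apply/implyP => _; have [a aA ay] := up y yT.
      apply/exists_inP; exists a => //; rewrite (ltW ay) /=.
      apply: connect_trans cx _; apply: connect1.
      by rewrite /e /bip_adj aA xS (lt_trans ay yx) orbT.
  by rewrite /P y0S connect0 (disjointFl dts y0S).
exists ([set y | connect e y0 y] :&: Ap, [set y | connect e y0 y] :&: As).
have x0I : x0 \in Int X Y.
  rewrite !inE; apply/andP; split; apply/exists_inP.
    by exists x0; rewrite ?le_refl.
  by exists y0; [rewrite hy0 cvy0 y0S | exact: ltW].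
have y0S' : y0 \in Ap :|: As by rewrite inE y0S orbT.
have sub : Int X Y \subset Int ([set y | connect e y0 y] :&: Ap) ([set y | connect e y0 y] :&: As).
  apply/subsetP => z; rewrite !inE => /andP[/exists_inP[x xX xz] /exists_inP[y yY zy]].
  have [hx _] := hs x; have [_ hy] := hs y.
  rewrite hx in xX; rewrite hy in yY.
  case/andP: xX => cvx xT; case/andP: yY => cvy yS.
  have /andP[_ Px2] := Pall x cvx; have /andP[Py1 _] := Pall y cvy.
  apply/andP; split; apply/exists_inP.
    move/implyP: Px2 => /(_ xT) /exists_inP[a aA /andP[ax ca]].
    by exists a; [rewrite !inE ca aA | exact: le_trans ax xz].
  by exists y => //; rewrite !inE yS andbT; move/implyP: Py1; apply.
split; first by split; [exact: comp_node y0S' | exact: sub].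
case=> N1 N2 /= [nN sN].
exact: uniq_node dps (comp_node y0S') nN (subsetP sub _ x0I) (subsetP sN _ x0I).
Qed.

End Aux.
Arguments up_strict {disp T A B}.
Arguments case1 {disp T Ap At As X Y}.
Arguments case2 {disp T Ap At As X Y}.

Theorem proposition9 (disp : Order.disp_t) (T : finPOrderType disp)
  (k : nat) (A : nat -> {set T}) (t p s : nat) :
  regular_poset A k ->
  (3 <= t <= k)%N ->
  consecutive A t.-1 p s ->
  sqlt (A p) (A t) -> sqlt (A t) (A s) ->
  forall X Y : {set T},
    is_node (A p) (A t) X Y \/ is_node (A t) (A s) X Y ->
    exists! N : {set T} * {set T},
      is_node (A p) (A s) N.1 N.2 /\ Int X Y \subset Int N.1 N.2.
Proof.
move=> [ma [_ [disj _]]] /andP[t3 tk] [/andP[p1 pt] /andP[s1 st] /andP[_ nps] _]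
  /andP[spt _] /andP[sts _] X Y nd.
have pk : (1 <= p <= k)%N by rewrite p1 /=; apply: leq_trans pt _; apply: leq_trans (leq_pred t) tk.
have sk : (1 <= s <= k)%N by rewrite s1 /=; apply: leq_trans st _; apply: leq_trans (leq_pred t) tk.
have tk' : (1 <= t <= k)%N by rewrite tk andbT; apply: leq_trans t3.
have npt : p != t by apply/eqP => e; move: pt t3; rewrite e; case: (t) => // n; rewrite /= ltnn.
have nst : t != s by apply/eqP => e; move: st t3; rewrite -e; case: (t) => // n; rewrite /= ltnn.
have nps' : p != s by apply: contra nps => /eqP ->.
have dpt := disj _ _ pk tk' npt.
have dts := disj _ _ tk' sk nst.
have dps := disj _ _ pk sk nps'.
have up1 := up_strict (ma _ pk) (ma _ tk') dpt spt.
have up2 := up_strict (ma _ tk') (ma _ sk) dts sts.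
case: nd => nd.
  exact: case1 dpt dts dps spt sts up1 nd.
exact: case2 dpt dts dps sts up1 up2 nd.
Qed.
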